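(* Let $d\ge3$, let $P$ be a probability measure on $\mathbb{R}^d$ and $f\in L^2(P)$. Suppose: (i) there is $\bar c>0$ such that for every $m\in\mathbb N$ and every two-layer network $f_m({\bm x})=\sum_{i=1}^m a_i\sigma({\bm w}_i^T\tilde{\bm x})$ with $m$ neurons, $\|f-f_m\|_{L^2(P)}\ge\bar c\,m^{-1/(d-1)}$; (ii) there is $C>0$ such that for every Barron function $g$ and every $m\in\mathbb N$ there is a two-layer network $f_m$ with $m$ neurons satisfying $\|g-f_m\|_{L^2(P)}\le C\|g\|_{\mathcal B}/\sqrt m$. Then there is a constant $c_d>0$ depending only on $\bar c$, $C$ and $d$ such that for every $\varepsilon\in(0,\bar c/4]$ and every Barron function $\tilde f$ with $\|f-\tilde f\|_{L^2(P)}<\varepsilon$, \[ \|\tilde f\|_{\mathcal B}\ge c_d\,\varepsilon^{-\frac{d-3}{2}}. \]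
   Context: $\sigma(z)=\max(z,0)$, $\tilde{\bm x}=({\bm x}^T,1)^T$. A Barron function is $g({\bm x})=\mathbb{E}_{(a,{\bm w})\sim\rho}[a\sigma({\bm w}^T\tilde{\bm x})]$ for a probability measure $\rho$ on $\mathbb{R}\times\mathbb{R}^{d+1}$ with finite $\mathbb{E}_\rho[|a|\|{\bm w}\|_1]$; its Barron norm $\|g\|_{\mathcal B}$ is the infimum of $\mathbb{E}_\rho[|a|\|{\bm w}\|_1]$ over all such representations. *)

(* Defs.v *)
From HB Require Import structures.
From mathcomp Require Import all_boot all_order all_algebra.
From mathcomp Require Import all_classical all_reals all_analysis.
Set Implicit Arguments. Unset Strict Implicit. Unset Printing Implicit Defensive.
Import Order.TTheory GRing.Theory Num.Theory.
Import numFieldNormedType.Exports.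
Local Open Scope classical_set_scope.
Local Open Scope ring_scope.

Definition Rvec (R : realType) (n : nat) := g_sigma_algebraType (@open 'rV[R]_n).

Definition relu (R : realType) (z : R) : R := Num.max z 0.

Definition xtilde (R : realType) (d : nat) (x : 'rV[R]_d) : 'rV[R]_(d + 1) :=
  row_mx x (const_mx 1).

Definition wdot (R : realType) (d : nat) (w : 'rV[R]_(d + 1)) (x : 'rV[R]_d) : R :=
  \sum_(i < d + 1) w ord0 i * xtilde x ord0 i.

Definition norm1 (R : realType) (n : nat) (w : 'rV[R]_n) : R :=
  \sum_(i < n) `|w ord0 i|.

Definition network (R : realType) (d m : nat) (a : 'I_m -> R)
  (W : 'I_m -> 'rV[R]_(d + 1)) (x : Rvec R d) : R :=
  \sum_(i < m) a i * relu (wdot (W i) x).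

Definition is_network (R : realType) (d m : nat) (g : Rvec R d -> R) : Prop :=
  exists (a : 'I_m -> R) (W : 'I_m -> 'rV[R]_(d + 1)), g = network a W.

Definition param_space (R : realType) (d : nat) := (R * Rvec R (d + 1))%type.

Definition barron_cost (R : realType) (d : nat)
  (rho : probability (param_space R d) R) : \bar R :=
  (\int[rho]_z (`|z.1| * norm1 z.2)%:E)%E.

Definition barron_rep (R : realType) (d : nat) (g : Rvec R d -> R)
  (rho : probability (param_space R d) R) : Prop :=
  (barron_cost rho < +oo)%E /\
  forall x : Rvec R d, (g x)%:E = (\int[rho]_z (z.1 * relu (wdot z.2 x))%:E)%E.

Definition is_barron (R : realType) (d : nat) (g : Rvec R d -> R) : Prop :=
  exists rho : probability (param_space R d) R, barron_rep g rho.

Definition barron_norm (R : realType) (d : nat) (g : Rvec R d -> R) : \bar R :=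
  ereal_inf [set barron_cost rho | rho in [set rho | barron_rep g rho]].

Definition L2dist (R : realType) (d : nat) (P : probability (Rvec R d) R)
  (f g : Rvec R d -> R) : \bar R :=
  Lnorm P 2%:E (fun x => (f x - g x)%:E).

Definition inL2 (R : realType) (d : nat) (P : probability (Rvec R d) R)
  (f : Rvec R d -> R) : Prop :=
  measurable_fun setT f /\ (Lnorm P 2%:E (fun x => (f x)%:E) < +oo)%E.

(* Main.v *)
Require Import Defs.
From HB Require Import structures.
From mathcomp Require Import all_boot all_order all_algebra.
From mathcomp Require Import all_classical all_reals all_analysis.
From mathcomp Require Import ring lra.
Import Order.TTheory GRing.Theory Num.Theory.
Import numFieldNormedType.Exports.
Local Open Scope classical_set_scope.
Local Open Scope ring_scope.

Notation measurable_EFinP := measurable_realfun.measurable_EFinP.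
Notation measurable_funM := measurable_realfun.measurable_funM.
Notation measurable_funB := measurable_realfun.measurable_funB.

Section helpers.
Variable R : realType.

Lemma entry_le {m n} (M : 'M[R]_(m,n)) i j : `|M i j| <= `|M|.
Proof.
by rewrite [leRHS]/Num.Def.normr /= mx_normrE; apply/bigmax_geP; right => /=; exists (i, j).
Qed.

Lemma xt_entry {d} (x y : 'rV[R]_d) i :
  `|xtilde x ord0 i - xtilde y ord0 i| <= `|x - y|.
Proof.
rewrite /xtilde; case: (split_ordP i) => j ->.
  by rewrite !row_mxEl (_ : x ord0 j - y ord0 j = (x - y) ord0 j) ?entry_le // !mxE.
by rewrite !row_mxEr !mxE subrr normr0.
Qed.

Lemma xt_bound {d} (x : 'rV[R]_d) i : `|xtilde x ord0 i| <= `|x| + 1.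
Proof.
rewrite /xtilde; case: (split_ordP i) => j ->.
  rewrite row_mxEl; have := entry_le x ord0 j; lra.
by rewrite row_mxEr !mxE normr1 lerDr.
Qed.

Lemma sum_bound {n} {a b : 'I_n -> R} {M} : (forall i, `|b i| <= M) ->
  `|\sum_i a i * b i| <= (\sum_i `|a i|) * M.
Proof.
move=> hb; rewrite mulr_suml; apply: le_trans (ler_norm_sum _ _ _) _.
by apply: ler_sum => i _; rewrite normrM ler_wpM2l.
Qed.

Lemma relu_lip (a b : R) : `|relu a - relu b| <= `|a - b|.
Proof.
rewrite /relu; case: (leP a 0) => ha; case: (leP b 0) => hb.
- by rewrite subrr normr0.
- by rewrite sub0r normrN (gtr0_norm hb) ltr0_norm ?subr_lt0 ?(le_lt_trans ha hb) //; lra.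
- by rewrite subr0 (gtr0_norm ha) gtr0_norm ?subr_gt0 ?(le_lt_trans hb ha) //; lra.
- by [].
Qed.

Lemma norm1_le {n} (w : 'rV[R]_n) : norm1 w <= n%:R * `|w|.
Proof.
rewrite /norm1 (le_trans (ler_sum _ (fun i _ => entry_le w ord0 i))) //.
by rewrite sumr_const card_ord mulr_natl.
Qed.

Lemma norm1_ge0 n (w : 'rV[R]_n) : 0 <= norm1 w.
Proof. by apply: sumr_ge0 => i _. Qed.

Lemma wdot_lipx d w (x y : 'rV[R]_d) :
  `|wdot w x - wdot w y| <= norm1 w * `|x - y|.
Proof.
rewrite /wdot -sumrB; under eq_bigr do rewrite -mulrBr.
rewrite /norm1; exact: (sum_bound (xt_entry x y)).
Qed.

Lemma wdot_bound d w (x : 'rV[R]_d) :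
  `|wdot w x| <= norm1 w * (`|x| + 1).
Proof. rewrite /norm1; exact: (sum_bound (xt_bound x)). Qed.

Lemma wdot_lipw d (u v : 'rV[R]_(d + 1)) (x : 'rV[R]_d) :
  `|wdot u x - wdot v x| <= (d + 1)%:R * `|u - v| * (`|x| + 1).
Proof.
rewrite /wdot -sumrB; under eq_bigr do rewrite -mulrBl.
apply: (le_trans (sum_bound (xt_bound x))); rewrite ler_wpM2r //.
rewrite (le_trans _ (norm1_le (u - v))) // /norm1; apply: ler_sum => i _; by rewrite !mxE.
Qed.


Lemma lip_cont (V : normedModType R) (f : V -> R) (K : R) : 0 <= K ->
  (forall x y, `|f x - f y| <= K * `|x - y|) -> continuous f.
Proof.
move=> K0 hf x; apply/cvgrPdist_lt => e e0.
apply/nbhs_normP; exists (e / (K + 1)) => /=.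
  by rewrite divr_gt0 // ltr_wpDl.
move=> y /= hy; apply: (le_lt_trans (hf x y)).
have ht : e = (e / (K + 1)) * (K + 1) by rewrite divfK // gt_eqF // ltr_wpDl.
have := normr_ge0 (x - y); nra.
Qed.

Lemma cont_meas n (f : 'rV[R]_n -> R) : continuous f ->
  measurable_fun (setT : set (Rvec R n)) f.
Proof.
move=> cf; apply: (measurability _ (measurable_realfun.RGenOpens.measurableE R)).
move=> _ [_ [a [b ->] <-]]; apply: sub_sigma_algebra; rewrite setTI.
by apply: (proj1 (continuousP f) cf); exact: interval_open.
Qed.


Lemma relu_bound (a : R) : `|relu a| <= `|a|.
Proof. by have := relu_lip a 0; rewrite subr0 /relu maxxx subr0. Qed.

Lemma relu_cont : continuous (@relu R).
Proof. by apply: (@lip_cont _ _ 1) => // x y; rewrite mul1r relu_lip. Qed.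

Lemma relu_meas : measurable_fun setT (@relu R).
Proof. exact: measurable_realfun.continuous_measurable_fun relu_cont. Qed.

Lemma network_meas d m (a : 'I_m -> R) W :
  measurable_fun (setT : set (Rvec R d)) (network a W).
Proof.
apply: cont_meas; apply: (@lip_cont _ _ (\sum_i `|a i| * norm1 (W i))).
  by apply: sumr_ge0 => i _; apply: mulr_ge0 => //; exact: norm1_ge0.
move=> x y; rewrite /network -sumrB mulr_suml.
apply: (le_trans (ler_norm_sum _ _ _)); apply: ler_sum => i _.
rewrite -mulrBr normrM -mulrA ler_wpM2l //.
exact: (le_trans (relu_lip _ _) (wdot_lipx _ _ _ _)).
Qed.

Lemma norm1_meas n : measurable_fun (setT : set (Rvec R n)) (@norm1 R n).
Proof.
apply: cont_meas; apply: (@lip_cont _ _ n%:R) => // u v.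
rewrite /norm1 -sumrB; apply: (le_trans (ler_norm_sum _ _ _)).
rewrite (le_trans _ (norm1_le (u - v))) // /norm1; apply: ler_sum => i _.
by rewrite !mxE ler_dist_dist.
Qed.


Section barron.
Variable d : nat.
Variable rho : probability (param_space R d) R.

Let k (z : param_space R d) : R := `|z.1| * norm1 z.2.
Let h (x : Rvec R d) (z : param_space R d) : R := z.1 * relu (wdot z.2 x).

Lemma k_meas : measurable_fun setT k.
Proof.
apply: measurable_funM.
  exact: measurableT_comp (@measurable_realfun.normr_measurable _ _) measurable_fst.
exact: measurableT_comp (@norm1_meas _) measurable_snd.
Qed.

Lemma h_meas x : measurable_fun setT (h x).
Proof.
have hw : measurable_fun setT (fun w : Rvec R (d + 1) => wdot w x).
  apply: cont_meas; apply: (@lip_cont _ _ ((d + 1)%:R * (`|x| + 1))).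
    by apply: mulr_ge0 => //; apply: addr_ge0.
  by move=> u v; rewrite mulrAC wdot_lipw.
have hr := measurableT_comp relu_meas (measurableT_comp hw (@measurable_snd _ _ R (Rvec R (d + 1)))).
exact: measurable_funM measurable_fst hr.
Qed.

Lemma k_int : (barron_cost rho < +oo)%E -> rho.-integrable setT (EFin \o k).
Proof.
move=> hc; apply/integrableP; split. apply/measurable_EFinP. exact: k_meas.
rewrite (_ : (fun z => `|(EFin \o k) z|%E) = EFin \o k) //.
apply: funext => z /=; rewrite ger0_norm // /k.
by apply: mulr_ge0 => //; exact: norm1_ge0.
Qed.

Lemma h_int x : (barron_cost rho < +oo)%E -> rho.-integrable setT (EFin \o h x).
Proof.
move=> hc.
apply: (@le_integrable _ _ _ _ _ measurableT (EFin \o h x) _ _ _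
  (integrableZr measurableT (`|x| + 1) (k_int hc))).
  by apply/measurable_EFinP; exact: h_meas.
move=> z _ /=; rewrite lee_fin /h /k normrM.
rewrite [X in _ <= X]ger0_norm; last first.
  by apply: mulr_ge0; [apply: mulr_ge0 => //; exact: norm1_ge0|apply: addr_ge0].
rewrite -mulrA ler_wpM2l //.
exact: (le_trans (relu_bound _) (wdot_bound _ _ _)).
Qed.

Lemma barron_lip {g} : barron_rep g rho ->
  forall x y, `|g x - g y| <= fine (barron_cost rho) * `|x - y|.
Proof.
move=> [hc hg] x y.
have cge0 : (0 <= barron_cost rho)%E.
  apply: integral_ge0 => z _; rewrite lee_fin.
  by apply: mulr_ge0 => //; exact: norm1_ge0.
have cfin : barron_cost rho = (fine (barron_cost rho))%:E.
  by rewrite fineK // ge0_fin_numE.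
rewrite -lee_fin EFinM -cfin.
have e : (g x - g y)%:E = (\int[rho]_z ((h x z)%:E - (h y z)%:E))%E.
  by rewrite EFinB hg hg (integralB_EFin (f1:=h x) (f2:=h y) measurableT (h_int x hc) (h_int y hc)).
rewrite -abse_EFin e.
apply: (le_trans (le_abse_integral _ measurableT _)).
  apply/measurable_EFinP. exact: measurable_funB (h_meas x) (h_meas y).
have -> : barron_cost rho = (\int[rho]_z (EFin \o k) z)%E by [].
rewrite -(integralZr measurableT (k_int hc)).
under eq_integral do rewrite -EFinB abse_EFin.
apply: ge0_le_integral => //.
- apply/measurable_EFinP; apply: (measurableT_comp (@measurable_realfun.normr_measurable _ _)).
  exact: measurable_funB (h_meas x) (h_meas y).
- apply/measurable_EFinP; apply: measurable_funM; first exact: k_meas.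
  exact: measurable_cst.
move=> z _ /=; rewrite lee_fin /h /k -mulrBr normrM -mulrA.
rewrite ler_wpM2l //; exact: (le_trans (relu_lip _ _) (wdot_lipx _ _ _ _)).
Qed.

End barron.
End helpers.

Section core.
Variable R : realType.

Lemma core (d : nat) (cbar C eps s b u v : R) : (3 <= d)%N -> 0 < cbar -> 0 < C ->
  0 < eps -> eps <= cbar / 4 ->
  1 <= s -> s <= (cbar / (2 * eps)) `^ (d%:R - 1) ->
  (cbar / (2 * eps)) `^ (d%:R - 1) < s + 1 ->
  cbar * s `^ (- (d%:R - 1)^-1) <= u + v -> u < eps -> v <= C / Num.sqrt s * b ->
  (cbar / 2) `^ ((d%:R - 1) / 2) / (C * Num.sqrt 2) * eps `^ (- ((d%:R - 3) / 2)) <= b.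
Proof.
move=> d3 cb0 C0 e0 ecb s1.
set D := d%:R.
have D3 : 3 <= D by rewrite /D (ler_nat R 3 d).
set y := cbar / (2 * eps).
set x := y `^ (D - 1).
move=> sx xs hl hu hv.
have y0 : 0 < y by rewrite /y divr_gt0 // mulr_gt0.
have s0 : 0 < s by lra.
set t := s `^ (D - 1)^-1.
have t0 : 0 < t by apply: powR_gt0.
have ty : t <= y.
  have -> : y = x `^ (D - 1)^-1.
    by rewrite /x -powRrM mulfV ?powRr1 ?ltW // gt_eqF //; lra.
  apply: ge0_ler_powR => //; first by rewrite invr_ge0; lra.
  - by rewrite nnegrE ltW.
  - by rewrite nnegrE powR_ge0.
have h1 : 2 * eps <= cbar * s `^ (- (D - 1)^-1).
  rewrite powRN -/t.
  have : 2 * eps * t <= cbar.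
    have -> : cbar = 2 * eps * y by rewrite /y mulrC divfK // gt_eqF // mulr_gt0.
    by rewrite ler_wpM2l // mulr_ge0 // ltW.
  by rewrite -ler_pdivlMr // => H; rewrite mulrC.
have sq0 : 0 < Num.sqrt s by rewrite sqrtr_gt0.
have h3 : eps * Num.sqrt s < C * b.
  have : eps < C / Num.sqrt s * b by lra.
  by rewrite mulrAC -ltr_pdivlMr // mulrC.
have h4 : Num.sqrt x <= Num.sqrt 2 * Num.sqrt s.
  by rewrite -sqrtrM // ler_sqrt //; lra.
set A := (cbar / 2) `^ ((D - 1) / 2).
set E := eps `^ (- ((D - 1) / 2)).
have h5 : Num.sqrt x = A * E.
  rewrite -powR12_sqrt ?powR_ge0 // /x -powRrM.
  have -> : y = (cbar / 2) * eps `^ (-1) by rewrite powR_inv1 ?ltW // /y invfM mulrA.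
  rewrite powRM ?powR_ge0 ?divr_ge0 ?ltW // -powRrM.
  by rewrite /A /E mulN1r.
have h6 : eps * E = eps `^ (- ((D - 3) / 2)).
  rewrite -{1}(powRr1 (ltW e0)) /E -powRD; last by rewrite (gt_eqF e0) implybT.
  congr (_ `^ _); lra.
rewrite -h6 -/D.
have A0 : 0 <= A by apply: powR_ge0.
have E0 : 0 <= E by apply: powR_ge0.
have s20 : 0 < Num.sqrt 2 :> R by rewrite sqrtr_gt0.
have q0 : 0 < C * Num.sqrt 2 by rewrite mulr_gt0.
rewrite mulrAC ler_pdivrMr //.
have H1 : eps * Num.sqrt x <= eps * (Num.sqrt 2 * Num.sqrt s) by rewrite ler_wpM2l // ltW.
have H2 : Num.sqrt 2 * (eps * Num.sqrt s) <= Num.sqrt 2 * (C * b) by rewrite ler_wpM2l // ltW.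
rewrite h5 in H1.
have -> : A * (eps * E) = eps * (A * E) by rewrite mulrCA.
nra.
Qed.
End core.


Lemma barron_meas {R : realType} {d} {g : Rvec R d -> R} : is_barron g ->
  measurable_fun setT g.
Proof.
move=> [rho hr]; apply: cont_meas.
apply: (@lip_cont _ _ _ (fine (barron_cost rho))); last exact: (@barron_lip R d rho g hr).
apply: fine_ge0; apply: integral_ge0 => z _; rewrite lee_fin.
by apply: mulr_ge0 => //; exact: norm1_ge0.
Qed.

Theorem mainTheorem6 (R : realType) (d : nat) (cbar C : R) :
  (3 <= d)%N -> 0 < cbar -> 0 < C ->
  exists cd : R, 0 < cd /\
  forall (P : probability (Rvec R d) R) (f : Rvec R d -> R),
    inL2 P f ->
    (forall (m : nat) (fm : Rvec R d -> R), (0 < m)%N -> is_network m fm ->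
       ((cbar * (m%:R `^ (- (d%:R - 1)^-1)))%:E <= L2dist P f fm)%E) ->
    (forall (g : Rvec R d -> R) (m : nat), is_barron g -> (0 < m)%N ->
       exists fm : Rvec R d -> R, is_network m fm /\
         (L2dist P g fm <= (C / Num.sqrt m%:R)%:E * barron_norm g)%E) ->
    forall (eps : R) (ft : Rvec R d -> R),
      0 < eps -> eps <= cbar / 4 -> is_barron ft ->
      (L2dist P f ft < eps%:E)%E ->
      ((cd * (eps `^ (- ((d%:R - 3) / 2))))%:E <= barron_norm ft)%E.
Proof.
move=> d3 cb0 C0.
exists ((cbar / 2) `^ ((d%:R - 1) / 2) / (C * Num.sqrt 2)); split.
  by rewrite divr_gt0 ?powR_gt0 ?divr_gt0 ?mulr_gt0 ?sqrtr_gt0.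
move=> P f [mf _] hlow hup eps ft e0 ecb hft hdist.
have mft := barron_meas hft.
have B0 : (0 <= barron_norm ft)%E.
  apply/ereal_infP => _ [rho _ <-]; apply: integral_ge0 => z _; rewrite lee_fin.
  by apply: mulr_ge0 => //; exact: norm1_ge0.
have Boo : (barron_norm ft < +oo)%E.
  case: (hft) => rho hr; apply: (le_lt_trans _ hr.1); apply: ge_ereal_inf.
  by exists (barron_cost rho) => //; exists rho.
have Bfin : barron_norm ft \is a fin_num by rewrite ge0_fin_numE.
set X := (cbar / (2 * eps)) `^ (d%:R - 1).
have X1 : 1 <= X.
  have y1 : 1 <= cbar / (2 * eps) by rewrite ler_pdivlMr ?mulr_gt0 //; lra.
  have D1 : 0 <= d%:R - 1 :> R.
    by rewrite subr_ge0 (ler_nat R 1 d) (leq_trans _ d3).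
  by rewrite -(powRr0 (cbar / (2 * eps))) /X; apply: ler_powR.
set m := Num.truncn X.
have m1 : (0 < m)%N by rewrite truncn_gt0.
have mX : m%:R <= X by rewrite truncn_le (le_trans _ X1).
have Xm : X < m%:R + 1 by rewrite natr1; exact: truncnS_gt.
have [fm [[a [W efm]] hfm]] := hup ft m hft m1.
have hl := hlow m fm m1 (ex_intro _ a (ex_intro _ W efm)).
have mfm : measurable_fun setT fm by rewrite efm; exact: network_meas.
have hmk : (L2dist P f fm <= L2dist P f ft + L2dist P ft fm)%E.
  rewrite /L2dist.
  have -> : (fun x => (f x - fm x)%:E) =
      EFin \o ((fun x => f x - ft x) \+ (fun x => ft x - fm x)).
    by apply: funext => x /=; rewrite addrA subrK.
  apply: minkowski_EFin => //.
  - exact: measurable_funB.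
  - exact: measurable_funB.
  - by rewrite (ler_nat R 1 2).
have u0 : (0 <= L2dist P f ft)%E by apply: Lnorm_ge0.
have v0 : (0 <= L2dist P ft fm)%E by apply: Lnorm_ge0.
have ufin : L2dist P f ft \is a fin_num.
  by rewrite ge0_fin_numE // (lt_trans hdist) ?ltry.
have vfin : L2dist P ft fm \is a fin_num.
  rewrite ge0_fin_numE // (le_lt_trans hfm) //.
  by rewrite -(fineK Bfin) -EFinM ltry.
rewrite -(fineK Bfin) lee_fin.
apply: (@core R d cbar C eps m%:R _ (fine (L2dist P f ft)) (fine (L2dist P ft fm))) => //.
- by rewrite (ler_nat R 1 m).
- by rewrite -lee_fin EFinD !fineK //; apply: le_trans hl hmk.
- by rewrite -lte_fin fineK.
- by rewrite -lee_fin EFinM !fineK.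
Qed.
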